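(* Let $\mathcal{D}_1=\{(z_1,z_2)\in\mathbb{C}^2: 1+|z_1|^2-|z_2|^2>|1+z_1^2-z_2^2|,\ \mathrm{Im}(z_1(1+\overline{z_2}))>0\}$ and $\mathcal{H}=\{(z_1,z_2)\in\mathbb{C}^2:\mathrm{Im}(z_1)>0,\ z_2\notin(-\infty,-1]\cup[1,\infty)\}$. Then $\mathcal{D}_1\subset\mathcal{H}$, and if $(z_1,z_2)\in\mathcal{D}_1$ then $(z_1,0)\in\mathcal{D}_1$. *)

(* Defs.v *)
From Stdlib Require Import Reals.
From Coquelicot Require Import Coquelicot.
Open Scope R_scope.
Open Scope C_scope.

Definition D1 (z1 z2 : C) : Prop :=
  (1 + (Cmod z1)^2 - (Cmod z2)^2 > Cmod (1 + z1 * z1 - z2 * z2))%R /\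
  (Im (z1 * (1 + Cconj z2)) > 0)%R.

Definition Hset (z1 z2 : C) : Prop :=
  (Im z1 > 0)%R /\
  ~ (Im z2 = 0 /\ (Re z2 <= -1 \/ 1 <= Re z2))%R.

(* Main.v *)
Require Import Defs.
From Stdlib Require Import Reals Lra Psatz.
From Coquelicot Require Import Coquelicot.

Lemma sq_lt (L x y : R) : L > sqrt (x * (x * 1) + y * (y * 1)) -> x^2 + y^2 < L^2.
Proof.
  intros H.
  assert (H0 : 0 <= x * (x * 1) + y * (y * 1)) by nra.
  assert (Hs := sqrt_pos (x * (x * 1) + y * (y * 1))).
  assert (Hs2 := sqrt_sqrt _ H0).
  nra.
Qed.

Lemma sq_gt (L x y : R) : 0 < L -> x^2 + y^2 < L^2 -> L > sqrt (x * (x * 1) + y * (y * 1)).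
Proof.
  intros H1 H2.
  assert (H0 : 0 <= x * (x * 1) + y * (y * 1)) by nra.
  assert (Hs := sqrt_pos (x * (x * 1) + y * (y * 1))).
  assert (Hs2 := sqrt_sqrt _ H0).
  nra.
Qed.

Theorem lemma3p1 :
  (forall z1 z2 : C, D1 z1 z2 -> Hset z1 z2) /\
  (forall z1 z2 : C, D1 z1 z2 -> D1 z1 (RtoC 0)).
Proof.
  split.
  - intros [a b] [c d] [HA HB].
    unfold Cmod in HA; rewrite !pow2_sqrt in HA by (apply Rplus_le_le_0_compat; apply pow2_ge_0); simpl in HA, HB.
    apply sq_lt in HA.
    assert (K : b^2 > d^2 + (b*c - a*d)^2) by nra.
    unfold Hset; simpl. split.
    + destruct (Rle_or_lt b 0) as [Hb|Hb]; [|lra].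
      exfalso. nra.
    + intros [Hd Hc]. subst d. assert (c*c >= 1) by (destruct Hc; nra). nra.
  - intros [a b] [c d] [HA HB].
    unfold Cmod in HA; rewrite !pow2_sqrt in HA by (apply Rplus_le_le_0_compat; apply pow2_ge_0); simpl in HA, HB.
    apply sq_lt in HA.
    assert (K : b^2 > d^2 + (b*c - a*d)^2) by nra.
    assert (Hb : b > 0).
    { destruct (Rle_or_lt b 0) as [Hb|Hb]; [|lra]. exfalso. nra. }
    unfold D1, Cmod; rewrite !pow2_sqrt by (apply Rplus_le_le_0_compat; apply pow2_ge_0); simpl.
    split; [|nra].
    apply sq_gt; nra.
Qed.
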